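(* Let $T$ be a non-abelian finite simple group, $k\geqslant 2$, $W=W(k,T)=T^k.(\mathrm{Out}(T)\times S_k)$ acting on $\Omega=[W:D]$, and let $t_1,\dots,t_k\in T$. Then $\{D,D(\varphi_{t_1},\dots,\varphi_{t_k})\}$ is a base for $W$ if and only if $t_1,\dots,t_k$ are distinct and $\mathrm{Hol}(T,\{t_1,\dots,t_k\})=1$.
   Context: $W(k,T)=\{(\alpha_1,\dots,\alpha_k)\pi\in\mathrm{Aut}(T)\wr S_k:\alpha_1\mathrm{Inn}(T)=\alpha_i\mathrm{Inn}(T)\ \forall i\}$, $D=\{(\alpha,\dots,\alpha)\pi:\alpha\in\mathrm{Aut}(T),\pi\in S_k\}$, $\Omega$ the right cosets of $D$ in $W$ with action by right multiplication. $\varphi_t$ is the inner automorphism $x\mapsto t^{-1}xt$. A base is a subset of $\Omega$ with trivial pointwise stabiliser. $\mathrm{Hol}(T)=T{:}\mathrm{Aut}(T)$ acts on $T$ by $t^{g\alpha}=(g^{-1}t)^\alpha$, and $\mathrm{Hol}(T,S)$ is the setwise stabiliser of $S\subseteq T$. *)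

(* Defs.v *)
From HB Require Import structures.
From mathcomp Require Import all_boot all_fingroup all_solvable.
Set Implicit Arguments. Unset Strict Implicit. Unset Printing Implicit Defensive.
Import GroupScope.

Section Wreath.
Variables (gT : finGroupType) (k : nat).

(* phi_t : x |-> t^-1 x t  (= x ^ t in mathcomp) as a permutation of T *)
Definition inn_perm (t : gT) : {perm gT} := perm (conjg_inj t).

Definition Inn_set : {set {perm gT}} := [set inn_perm t | t in [set: gT]].

(* the element (alpha_1,...,alpha_k) pi of Aut(T) wr S_k, realised as a
   permutation of 'I_k * T via its (right) imprimitive action
   (i, x) |-> (i^pi, x^{alpha_i}) *)
Definition wr_fun (a : {ffun 'I_k -> {perm gT}}) (pi : 'S_k)
  (x : 'I_k * gT) : 'I_k * gT := (pi x.1, a x.1 x.2).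

Lemma wr_fun_inj a pi : injective (wr_fun a pi).
Proof.
move=> [i x] [j y] [/perm_inj eij]; rewrite /= in eij; subst j.
by move/perm_inj => ->.
Qed.

Definition wr_perm a pi : {perm 'I_k * gT} := perm (@wr_fun_inj a pi).

(* condition defining W(k,T): all alpha_i in Aut(T), and all in the same
   coset of Inn(T) (alpha_i Inn(T) = alpha_j Inn(T) for all i, j) *)
Definition W_cond (a : {ffun 'I_k -> {perm gT}}) : bool :=
  [forall i, a i \in Aut [set: gT]] &&
  [forall i, forall j, (a i)^-1 * a j \in Inn_set].

Definition Wkt : {set {perm 'I_k * gT}} :=
  [set wr_perm p.1 p.2 | p in [set p : {ffun 'I_k -> {perm gT}} * 'S_k
                                  | W_cond p.1]].

Definition Dkt : {set {perm 'I_k * gT}} :=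
  [set wr_perm [ffun=> p.1] p.2 | p in [set p : {perm gT} * 'S_k
                                  | p.1 \in Aut [set: gT]]].

Definition phi_tuple (t : 'I_k -> gT) : {perm 'I_k * gT} :=
  wr_perm [ffun i => inn_perm (t i)] 1.

(* B (a set of right cosets of D in W) is a base for W acting on [W:D] by
   right multiplication: its pointwise stabiliser in W is trivial *)
Definition is_base (B : {set {set {perm 'I_k * gT}}}) : bool :=
  'C_Wkt(B | 'Rs) == 1.
End Wreath.

(* Hol(T) = T : Aut(T), elements (g, alpha), acting on T by
   t^{g alpha} = (g^-1 t)^alpha ; Hol(T,S) = setwise stabiliser of S *)
Definition Hol_stab (gT : finGroupType) (S : {set gT}) :
  {set gT * {perm gT}} :=
  [set p : gT * {perm gT} | (p.2 \in Aut [set: gT]) &&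
     ([set p.2 (p.1^-1 * s) | s in S] == S)].

(* Main.v *)
Require Import Defs.
From mathcomp Require Import all_boot all_fingroup all_solvable.
Set Implicit Arguments. Unset Strict Implicit. Unset Printing Implicit Defensive.
Import GroupScope.

Section H.
Variables (gT : finGroupType) (k : nat).
Local Notation D := (Dkt gT k).
Local Notation W := (Wkt gT k).

Lemma wrE (a : {ffun 'I_k -> {perm gT}}) pi i x : wr_perm a pi (i, x) = (pi i, a i x).
Proof. by rewrite permE. Qed.

Lemma wrM (a b : {ffun 'I_k -> {perm gT}}) (pi s : 'S_k) : wr_perm a pi * wr_perm b s =
  wr_perm [ffun i => a i * b (pi i)] (pi * s).
Proof. by apply/permP => -[i x]; rewrite permM !wrE ffunE !permM. Qed.

Lemma wr1 : @wr_perm gT k [ffun=> 1] 1 = 1.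
Proof. by apply/permP => -[i x]; rewrite wrE ffunE !perm1. Qed.

Lemma innE (t x : gT) : inn_perm t x = x ^ t.
Proof. by rewrite permE. Qed.

Lemma inn_Aut t : inn_perm t \in Aut [set: gT].
Proof.
rewrite inE; apply/andP; split; first by apply/subsetP => y; rewrite inE.
by apply/morphicP => x y _ _; rewrite !innE conjMg.
Qed.

Lemma inn1 : inn_perm (1 : gT) = 1.
Proof. by apply/permP => x; rewrite innE conjg1 perm1. Qed.

Lemma D1 : 1 \in D.
Proof. apply/imsetP; exists (1, 1); first by rewrite inE group1. by rewrite /= wr1. Qed.

Lemma DM x y : x \in D -> y \in D -> x * y \in D.
Proof.
case/imsetP => -[a p]; rewrite inE /= => Aa ->.
case/imsetP => -[b q]; rewrite inE /= => Ab ->.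
apply/imsetP; exists (a * b, p * q); first by rewrite inE /= groupM.
rewrite wrM /=; congr wr_perm; apply/ffunP => i; by rewrite !ffunE.
Qed.

Lemma Drc x : x \in D -> D :* x = D.
Proof.
move=> Dx; apply/eqP; rewrite eqEcard card_rcoset leqnn andbT.
by apply/subsetP => z /rcosetP [y Dy ->]; apply: DM.
Qed.

Lemma DW : D \subset W.
Proof.
apply/subsetP => x /imsetP [[a p]]; rewrite inE /= => Aa ->.
apply/imsetP; exists ([ffun=> a], p) => //; rewrite inE /W_cond /=.
apply/andP; split; apply/forallP => i; rewrite ?ffunE //.
apply/forallP => j; rewrite !ffunE mulVg; apply/imsetP; exists 1; rewrite ?inE //.
by rewrite inn1.
Qed.

Section Aut.
Variables (a : {perm gT}) (Aa : a \in Aut [set: gT]).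
Lemma autM x y : a (x * y) = a x * a y.
Proof. by rewrite -(autmE Aa) morphM ?inE. Qed.
Lemma autV x : a x^-1 = (a x)^-1.
Proof. by rewrite -(autmE Aa) morphV ?inE. Qed.
Lemma autJ x y : a (x ^ y) = a x ^ a y.
Proof. by rewrite -(autmE Aa) morphJ ?inE. Qed.
End Aut.

Lemma center_triv : simple [set: gT] -> ~~ abelian [set: gT] ->
  forall u w : gT, (forall y, y ^ u = y ^ w) -> u = w.
Proof.
move=> hs hna u w H.
have Z1 : 'Z([set: gT]) = 1.
  case/simpleP: hs => _ /(_ _ (center_normal [set: gT]%G)) [//|hZ].
  by case/negP: hna; apply/center_idP.
have : u * w^-1 \in 'Z([set: gT]).
  apply/centerP; split; first by rewrite inE.
  move=> y _; have Hy : y ^ (u * w^-1) = y by rewrite conjgM H conjgK.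
  by rewrite /commute -{1}Hy conjgE !mulgA mulgV mul1g.
by rewrite Z1 inE -eq_mulgV1 => /eqP.
Qed.

Variable t : 'I_k -> gT.
Local Notation phi := (phi_tuple t).

Lemma stabP x : x \in 'C_W([set D; D :* phi] | 'Rs) <->
  (x \in D /\ exists2 d, d \in D & phi * x = d * phi).
Proof.
split.
  rewrite inE => /andP [Wx /astabP Cx].
  have CD := Cx D (set21 _ _); have CP := Cx _ (set22 D (D :* phi)).
  rewrite /= rcosetE in CD; rewrite /= rcosetE in CP.
  have Dx : x \in D by rewrite -CD; apply/rcosetP; exists 1; rewrite ?mul1g // D1.
  split => //.
  have : phi * x \in D :* phi :* x.
    by apply/rcosetP; exists phi => //; apply/rcosetP; exists 1; rewrite ?mul1g // D1.
  by rewrite CP => /rcosetP [d Dd ->]; exists d.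
move=> [Dx [d Dd eq]]; rewrite inE (subsetP DW) //=.
apply/astabP => B /set2P [->|->] /=; rewrite rcosetE; first exact: Drc.
by rewrite -rcosetM eq rcosetM Drc.
Qed.

End H.

Theorem lemma2p13 (gT : finGroupType) (k : nat) (t : 'I_k -> gT) :
  simple [set: gT] -> ~~ abelian [set: gT] -> 2 <= k ->
  (is_base [set Dkt gT k; Dkt gT k :* phi_tuple t] <->
   injective t /\ Hol_stab [set t i | i : 'I_k] = [set (1, 1)]).
Proof.
move=> hs hna hk.
set D := Dkt gT k; set phi := phi_tuple t.
have i0 : 'I_k := Ordinal (leq_trans (isT : 0 < 2) hk).
have oneHol : (1, 1) \in Hol_stab [set t i | i : 'I_k].
  rewrite inE group1 /=; apply/eqP/setP => z.
  apply/imsetP/idP => [[s Ss ->]|Sz]; first by rewrite perm1 invg1 mul1g.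
  by exists z; rewrite ?perm1 ?invg1 ?mul1g.
split.
  move=> /eqP base.
  have key : forall x, x \in D -> forall d, d \in D -> phi * x = d * phi -> x = 1.
    move=> x Dx d Dd eq.
    suff : x \in 'C_(Wkt gT k)([set D; D :* phi] | 'Rs) by rewrite base => /set1gP.
    by apply/stabP; split=> //; exists d.
  have tinj : injective t.
    move=> i j tij; case: (eqVneq i j) => // nij.
    set x := @wr_perm gT k [ffun=> 1] (tperm i j).
    have Dx : x \in D by apply/imsetP; exists (1, tperm i j); first by rewrite inE group1.
    have := key x Dx x Dx.
    have -> : phi * x = x * phi.
      rewrite /phi /phi_tuple /x !wrM mulg1 mul1g; congr wr_perm.
      apply/ffunP => l; rewrite !ffunE mulg1 mul1g.
      by case: tpermP => [->|->|//]; rewrite tij.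
    move=> /(_ erefl) /(congr1 (fun p : {perm _} => p (i, 1))).
    by rewrite /x wrE perm1 tpermL => -[] /eqP; rewrite eq_sym (negbTE nij).
  split=> //; apply/eqP; rewrite eqEsubset sub1set oneHol andbT.
  apply/subsetP => -[g a]; rewrite inE /= => /andP [Aa /eqP Sim]; apply/set1P.
  have fP : forall i, exists j, t j == a (g^-1 * t i).
    move=> i; have : a (g^-1 * t i) \in [set t i | i : 'I_k].
      by rewrite -Sim; apply/imsetP; exists (t i) => //; apply/imsetP; exists i.
    by case/imsetP => j _ ->; exists j.
  pose f i := xchoose (fP i).
  have fE i : t (f i) = a (g^-1 * t i) by apply/eqP; apply: (xchooseP (fP i)).
  have finj : injective f.
    by move=> i j /(congr1 t); rewrite !fE => /perm_inj /mulgI /tinj.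
  pose p := perm finj.
  have pE i : t (p i) = a (g^-1 * t i) by rewrite permE fE.
  set x := @wr_perm gT k [ffun=> a] p.
  have Dx : x \in D by apply/imsetP; exists (a, p); first by rewrite inE.
  have Dd : @wr_perm gT k [ffun=> a * inn_perm (a g)] p \in D.
    by apply/imsetP; exists (a * inn_perm (a g), p); first by rewrite inE groupM ?inn_Aut.
  have := key x Dx _ Dd.
  have -> : phi * x = wr_perm [ffun=> a * inn_perm (a g)] p * phi.
    rewrite /phi /phi_tuple /x !wrM mulg1 mul1g; congr wr_perm.
    apply/ffunP => l; rewrite !ffunE; apply/permP => y.
    rewrite !permM !innE pE -conjgM -autM // mulKVg autJ //.
  move=> /(_ erefl) x1.
  have xE l y : (p l, a y) = (l, y).
    by move: (congr1 (fun q : {perm _} => q (l, y)) x1); rewrite /x wrE ffunE perm1.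
  have a1 : a = 1 by apply/permP => y; rewrite perm1; case: (xE i0 y).
  have : t (p i0) = t i0 by case: (xE i0 1) => ->.
  rewrite pE a1 perm1 -{2}(mul1g (t i0)) => /mulIg g1.
  by rewrite -[g]invgK g1 invg1.
move=> [tinj HolS]; apply/eqP/setP => x; apply/idP/idP => [Cx|]; last first.
  move/set1gP => ->; apply/stabP; split; first exact: D1.
  by exists 1; rewrite ?mulg1 ?mul1g //; exact: D1.
case/stabP: Cx => Dx [d Dd eq]; apply/set1gP.
case/imsetP: Dx eq => -[a p]; rewrite inE /= => Aa -> eq.
case/imsetP: Dd eq => -[b q]; rewrite inE /= => Ab -> eq.
move: eq; rewrite /phi /phi_tuple !wrM mulg1 mul1g => eq.
have E l y : (p l, a (y ^ t l)) = (q l, b y ^ t (q l)).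
  move: (congr1 (fun r : {perm _} => r (l, y)) eq).
  by rewrite !wrE !ffunE !permM !innE.
have pq l : p l = q l by case: (E l 1).
pose u l := a (t l) * (t (p l))^-1.
have uE l y : a y ^ u l = b y.
  case: (E l y) => _; rewrite autJ // -pq => H.
  by rewrite /u conjgM H conjgK.
have uc l : u l = u i0.
  by apply: (center_triv hs hna) => z; rewrite -(permKV a z) !uE.
pose g := a^-1 (u i0).
have hE l : a (g^-1 * t l) = t (p l).
  by rewrite autM // autV // /g permKV -(uc l) /u invMg invgK mulgKV.
have : (g, a) \in Hol_stab [set t i | i : 'I_k].
  rewrite inE Aa /=; apply/eqP/setP => z; apply/imsetP/imsetP.
    case=> s /imsetP [l _ ->] ->; exists (p l) => //; by rewrite hE.
  case=> l _ ->; exists (t (p^-1 l)); first by apply/imsetP; exists (p^-1 l).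
  by rewrite hE permKV.
rewrite HolS => /set1P [g1 a1].
have pl l : p l = l by apply: tinj; rewrite -hE g1 a1 invg1 mul1g perm1.
by apply/permP => -[l y]; rewrite wrE ffunE a1 pl !perm1.
Qed.
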